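(* Let $G=(V,E)$ be a graph with vertex set $V=\{1,\ldots,n\}$. Let $G'$ be the digraph obtained by orienting each edge $\{i,j\}$ as the arc $(\min\{i,j\},\max\{i,j\})$. For each vertex $i$ let $n_i$ be its number of outgoing arcs in $G'$, let $\hat n_i=0$ if $n_i=0$ and $\hat n_i=\lceil\log n_i\rceil$ otherwise, and let $q=\sum_{i=1}^n\hat n_i$. Let $x_1,\ldots,x_q$ be distinct indeterminates, partitioned into consecutive blocks, the $i$-th block consisting of $\hat n_i$ indeterminates $x_{s_i+1},\ldots,x_{s_i+\hat n_i}$ where $s_i=\sum_{h<i}\hat n_h$. Label the outgoing arcs of vertex $i$ as follows: if $n_i=1$, its unique outgoing arc is labeled $1$; if $n_i\ge 2$, its $n_i$ outgoing arcs are labeled by pairwise distinct monomials of the form $\prod_{h=1}^{\hat n_i}x_{s_i+h}^{a_h}$ with each $a_h\in\{0,1\}$. Let $f_{i,j}$ denote the label of arc $(i,j)$, and let $Q(x_1,\ldots,x_q)$ be the polynomial obtained from $\mathrm{Pf}(G)$ by replacing each indeterminate $y_{i,j}$ by $f_{i,j}$. Then $G$ has a perfect matching if and only if $Q(x_1,\ldots,x_q)\not\equiv 0$.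
   Context: $\log$ is to base 2. A perfect matching of $G$ is a set $L$ of edges such that every vertex is incident to exactly one edge of $L$. For each edge $\{i,j\}$ with $i<j$ there is an indeterminate $y_{i,j}$. For a perfect matching $L=\{\{i_1,j_1\},\ldots,\{i_{n/2},j_{n/2}\}\}$ written with $i_r<j_r$ for all $r$ and $i_1<i_2<\cdots<i_{n/2}$, let $\pi(L)=y_{i_1,j_1}\cdots y_{i_{n/2},j_{n/2}}$ and let $\sigma(L)\in\{1,-1\}$ be the sign of the permutation $1\mapsto i_1,2\mapsto j_1,\ldots,n-1\mapsto i_{n/2},n\mapsto j_{n/2}$. Then $\mathrm{Pf}(G)=\sum_L\sigma(L)\pi(L)$, the sum over all perfect matchings $L$ of $G$. *)

(* Defs.v *)
From HB Require Import structures.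
From mathcomp Require Import all_boot all_order all_algebra all_fingroup.
From mathcomp Require Import mpoly.
Set Implicit Arguments. Unset Strict Implicit. Unset Printing Implicit Defensive.
Import Order.TTheory GRing.Theory Num.Theory.
Local Open Scope ring_scope.

(* Vertices {1..n} are represented by 'I_n = {0..n-1} (same order).
   A graph is a symmetric irreflexive relation e on 'I_n. *)
Section Defs.
Variables (n : nat) (e : rel 'I_n).

(* A perfect matching: a set of edges {i,j}, each recorded as the pair (i,j)
   with i < j, such that every vertex is incident to exactly one of them. *)
Definition perfect_matching (L : {set 'I_n * 'I_n}) : bool :=
  [forall p in L, (p.1 < p.2)%N && e p.1 p.2] &&
  [forall v : 'I_n, #|[set p in L | (p.1 == v) || (p.2 == v)]| == 1%N].

(* The edges of L sorted by their first (smaller) endpoint, and the word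
   i_1 j_1 i_2 j_2 ... i_{n/2} j_{n/2}. *)
Definition pm_word (L : {set 'I_n * 'I_n}) : seq 'I_n :=
  flatten [seq [:: p.1; p.2] |
             p <- sort (fun p q : 'I_n * 'I_n => (p.1 <= q.1)%N) (enum L)].

Definition pm_sign (L : {set 'I_n * 'I_n}) : int :=
  match [pick s : 'S_n | [forall k : 'I_n, s k == nth k (pm_word L) k]] with
  | Some s => (-1) ^+ odd_perm s
  | None => 0
  end.

(* Pf(G) with the indeterminate y_{i,j} (i<j) replaced by y i j in a
   commutative ring R:  sum_L sigma(L) prod_{(i,j) in L} y i j.
   With y i j := f_{i,j} this is the polynomial Q of the paper. *)
Definition pfaffian_at (R : comRingType) (y : 'I_n -> 'I_n -> R) : R :=
  \sum_(L : {set 'I_n * 'I_n} | perfect_matching L)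
     (1 *~ pm_sign L) * \prod_(p in L) y p.1 p.2.

Definition out_arc (i j : 'I_n) : bool := (i < j)%N && e i j.

Definition outdeg (i : 'I_n) : nat := #|[set j | out_arc i j]|.

Definition hatn (i : 'I_n) : nat :=
  if outdeg i == 0%N then 0%N else up_log 2 (outdeg i).

Definition qdim : nat := (\sum_(i < n) hatn i)%N.
Definition sblock (i : 'I_n) : nat := (\sum_(h < n | (h < i)%N) hatn h)%N.

(* The i-th block of variables: indices s_i, ..., s_i + \hat n_i - 1
   (0-based versions of x_{s_i+1}, ..., x_{s_i+\hat n_i}). *)
Definition in_block (i : 'I_n) (k : 'I_qdim) : bool :=
  (sblock i <= k)%N && (k < sblock i + hatn i)%N.

Definition valid_labeling (f : 'I_n -> 'I_n -> {mpoly int[qdim]}) : Prop :=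
  forall i : 'I_n,
    (outdeg i = 1%N -> forall j, out_arc i j -> f i j = 1) /\
    ((2 <= outdeg i)%N ->
       (forall j, out_arc i j ->
          exists a : 'I_qdim -> bool,
            f i j = \prod_(k : 'I_qdim | in_block i k) 'X_k ^+ a k) /\
       (forall j j', out_arc i j -> out_arc i j' -> j != j' -> f i j != f i j')).

End Defs.

(* Main.v *)
Require Import Defs.
From HB Require Import structures.
From mathcomp Require Import all_boot all_order all_algebra all_fingroup.
From mathcomp Require Import mpoly.
From mathcomp Require Import zify.
Import Order.TTheory GRing.Theory Num.Theory.
Local Open Scope ring_scope.
Set Implicit Arguments. Unset Strict Implicit.

Section S.
Variables (n : nat) (e : rel 'I_n).

Lemma sblock_le (i i' : 'I_n) : (i < i')%N -> (sblock e i + hatn e i <= sblock e i')%N.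
Proof.
move=> lt; rewrite /sblock.
rewrite [X in (_ <= X)%N](bigD1 i) //= [X in (X <= _)%N]addnC leq_add2l.
rewrite [X in (_ <= X)%N](bigID (fun h : 'I_n => (h < i)%N)) /=.
rewrite [X in (X <= _)%N](eq_bigl (fun h : 'I_n => ((h < i') && (h != i)) && (h < i))%N) ?leq_addr // => h.
case: (ltnP h i) => hi; rewrite ?andbT ?andbF //= (ltn_trans hi lt) /=.
have -> : h != i by apply/eqP=> E; rewrite E ltnn in hi.
by [].
Qed.

Lemma block_uniq (i i' : 'I_n) (k : 'I_(qdim e)) :
  in_block i k -> in_block i' k -> i = i'.
Proof.
rewrite /in_block => /andP[a b] /andP[c d].
case: (ltngtP i i') => [lt|lt|/val_inj //].
- have := sblock_le lt; lia.
- have := sblock_le lt; lia.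
Qed.

Variable f : 'I_n -> 'I_n -> {mpoly int[qdim e]}.
Hypothesis hf : valid_labeling f.
Definition M i j := mlead (f i j).

Lemma f_mono i j : out_arc e i j ->
  f i j = 'X_[M i j] /\ forall k, ~~ in_block i k -> M i j k = 0%N.
Proof.
move=> a; have [h1 h2] := hf i.
have pos: (0 < outdeg e i)%N by apply/card_gt0P; exists j; rewrite inE.
case: (ltngtP (outdeg e i) 1) => [lt1|ge2|eq1].
- by move: lt1 pos; lia.
- rewrite /M; have [a' ->] := (h2 ge2).1 j a.

  have E : \prod_(k | in_block i k) ('X_k : {mpoly int[qdim e]}) ^+ a' k
     = 'X_[\sum_(k | in_block i k) (U_(k) *+ a' k)] by rewrite mprodXnE.
  rewrite E mleadXm; split => // k kb.
  rewrite mnm_sumE big1 // => k' kb'; rewrite mulmnE mnm1E.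
  by case: eqP => [E'|]; rewrite ?mul0n //; rewrite -E' kb' in kb.
- rewrite /M (h1 eq1 j a) -mpolyX0 mleadXm; split => // k _; exact: mnm0E.
Qed.

Lemma f_inj i j j' : out_arc e i j -> out_arc e i j' -> f i j = f i j' -> j = j'.
Proof.
move=> a a' E; have [h1 h2] := hf i.
have pos: (0 < outdeg e i)%N by apply/card_gt0P; exists j; rewrite inE.
case: (ltngtP (outdeg e i) 1) => [lt1|ge2|eq1].
- by move: lt1 pos; lia.
- by apply/eqP/negPn/negP => ne; move: ((h2 ge2).2 _ _ a a' ne); rewrite E eqxx.
- move/eqP: eq1; rewrite /outdeg => /cards1P [x Ex].
  have : j \in [set j | out_arc e i j] by rewrite inE.
  have : j' \in [set j | out_arc e i j] by rewrite inE.
  by rewrite Ex !inE => /eqP -> /eqP ->.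
Qed.

Section PM.
Variable L : {set 'I_n * 'I_n}.
Hypothesis hL : perfect_matching e L.

Lemma pm_edge p : p \in L -> out_arc e p.1 p.2.
Proof. by move: hL => /andP[/forallP H _] pL; move: (H p); rewrite pL. Qed.

Lemma pm_card v : #|[set p in L | (p.1 == v) || (p.2 == v)]| = 1%N.
Proof. by move: hL => /andP[_ /forallP H]; apply/eqP. Qed.

Lemma pm_cover v : exists2 p, p \in L & (p.1 == v) || (p.2 == v).
Proof.
have /eqP/cards1P[x Ex] := pm_card v.
have : x \in [set p in L | (p.1 == v) || (p.2 == v)] by rewrite Ex inE.
by rewrite inE => /andP[xL xv]; exists x.
Qed.

Lemma pm_uniq v p q : p \in L -> q \in L -> (p.1 == v) || (p.2 == v) ->
  (q.1 == v) || (q.2 == v) -> p = q.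
Proof.
move=> pL qL pv qv; have /eqP/cards1P[x Ex] := pm_card v.
have : p \in [set p in L | (p.1 == v) || (p.2 == v)] by rewrite inE pL.
have : q \in [set p in L | (p.1 == v) || (p.2 == v)] by rewrite inE qL.
by rewrite Ex !inE => /eqP -> /eqP ->.
Qed.

Lemma pm_prod : \prod_(p in L) f p.1 p.2 = 'X_[\sum_(p in L) M p.1 p.2].
Proof.
rewrite -mprodXE; apply: eq_bigr => p pL; exact: (f_mono (pm_edge pL)).1.
Qed.

Lemma pm_block p k : p \in L -> in_block p.1 k ->
  (\sum_(q in L) M q.1 q.2)%MM k = M p.1 p.2 k.
Proof.
move=> pL kb; rewrite mnm_sumE (bigD1 p) //= big1 ?addn0 // => q /andP[qL qp].
apply: (f_mono (pm_edge qL)).2; apply/negP => kq.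
have E := block_uniq kq kb.
by move: qp; rewrite (pm_uniq qL pL (v := p.1)) ?eqxx // E eqxx.
Qed.
End PM.

Lemma M_ext i j j' : out_arc e i j -> out_arc e i j' ->
  (forall k, in_block i k -> M i j k = M i j' k) -> j = j'.
Proof.
move=> a a' H; apply: (f_inj a a').
rewrite (f_mono a).1 (f_mono a').1; congr 'X_[_]; apply/mnmP => k.
case kb: (in_block i k); first exact: H.
by rewrite (f_mono a).2 ?kb // (f_mono a').2 ?kb.
Qed.

Lemma pm_step L1 L2 : perfect_matching e L1 -> perfect_matching e L2 ->
  (\sum_(p in L1) M p.1 p.2)%MM = (\sum_(p in L2) M p.1 p.2)%MM ->
  forall p : 'I_n * 'I_n, (forall q : 'I_n * 'I_n, (q.1 < p.1)%N -> q \in L2 -> q \in L1) ->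
  p \in L1 -> p \in L2.
Proof.
move=> h1 h2 ES p IH pL.
have [q qL qv] := pm_cover h2 p.1.
case/orP: qv => /eqP qv.
- have pq : p = q.
    have a := pm_edge h1 pL; have b := pm_edge h2 qL.
    have b' : out_arc e p.1 q.2 by rewrite -qv.
    have E2 : p.2 = q.2.
      apply: (M_ext a b') => k kb.
      have kb' : in_block q.1 k by rewrite qv.
      transitivity (M q.1 q.2 k); last by rewrite qv.
      by rewrite -(pm_block h1 pL kb) ES (pm_block h2 qL kb').
    by rewrite [p]surjective_pairing [q]surjective_pairing qv E2.
  by rewrite pq.
- have qL1 : q \in L1.
    apply: (IH _ _ qL); rewrite -qv; move: (pm_edge h2 qL); by case/andP.
  have -> : p = q by apply: (@pm_uniq _ h1 p.1 p q pL qL1); rewrite ?qv ?eqxx ?orbT.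
  exact: qL.
Qed.

Lemma pm_inj L1 L2 : perfect_matching e L1 -> perfect_matching e L2 ->
  (\sum_(p in L1) M p.1 p.2)%MM = (\sum_(p in L2) M p.1 p.2)%MM -> L1 = L2.
Proof.
move=> h1 h2 ES.
suff H : forall (i : nat) (p : 'I_n * 'I_n), p.1 = i :> nat -> (p \in L1) = (p \in L2).
  by apply/setP => p; exact: H.
elim/ltn_ind => i IH p pi; apply/idP/idP.
- apply: (pm_step h1 h2 ES) => q qi qL; rewrite (IH q.1) // -pi //.
- apply: (pm_step h2 h1 (esym ES)) => q qi qL; rewrite -(IH q.1) // -pi //.
Qed.

Lemma pm_sign_nz L : perfect_matching e L -> pm_sign L != 0.
Proof.
move=> hL; set w := pm_word L.
have wU : uniq w.
  rewrite /w /pm_word.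
  have : uniq (sort (fun p q : 'I_n * 'I_n => (p.1 <= q.1)%N) (enum L)) by rewrite sort_uniq enum_uniq.
  have : {subset sort (fun p q : 'I_n * 'I_n => (p.1 <= q.1)%N) (enum L) <= L}.
    by move=> p; rewrite mem_sort mem_enum.
  elim: (sort _ _) => //= a s IH sub /andP[an su].
  have IH' : uniq (flatten [seq [:: p.1; p.2] | p <- s]).
    by apply: IH => // p ps; apply: sub; rewrite inE ps orbT.
  have aL : a \in L by apply: sub; rewrite inE eqxx.
  have := pm_edge hL aL => /andP[lt _].
  have nin : forall x, (x == a.1) || (x == a.2) -> x \notin flatten [seq [:: p.1; p.2] | p <- s].
    move=> x xa; apply/negP => /flatten_mapP [q qs xq].
    have qL : q \in L by apply: sub; rewrite inE qs orbT.
    have qa : q = a.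
      apply: (@pm_uniq _ hL x q a qL aL).
        by move: xq; rewrite !inE ![_ == x]eq_sym.
      by move: xa; rewrite ![_ == x]eq_sym.
    by move: an; rewrite -qa qs.
  have ne : a.1 != a.2 by apply/eqP=> E; rewrite E ltnn in lt.
  by rewrite /= inE negb_or IH' !nin ?eqxx ?orbT ?ne.
have wA : forall v, v \in w.
  move=> v; have [p pL pv] := pm_cover hL v.
  apply/flatten_mapP; exists p; first by rewrite mem_sort mem_enum.
  by move: pv; rewrite !inE ![_ == v]eq_sym.
have ws : size w = n.
  have eqw : w =i enum 'I_n by move=> v; rewrite mem_enum wA.
  have := uniq_perm wU (enum_uniq 'I_n) eqw.
  by move/perm_size; rewrite size_enum_ord.
have ginj : injective (fun k : 'I_n => nth k w k).
  move=> k1 k2 /= E; apply/val_inj/eqP => /=.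
  rewrite -(nth_uniq k1 _ _ wU) ?ws ?ltn_ord //.
  by rewrite E (set_nth_default k1 k2) // ws ltn_ord.
rewrite /pm_sign; case: pickP => [s _|H].
  by rewrite GRing.signr_eq0.
move: (H (perm ginj)); rewrite -/w; move/negP; case; apply/forallP => k.
by rewrite permE.
Qed.

Theorem main (e_sym : ssrbool.symmetric e) (e_irr : irreflexive e) :
  (exists L : {set 'I_n * 'I_n}, perfect_matching e L) <->
  pfaffian_at e f != 0.
Proof.
split.
- case=> L0 h0; set m0 := (\sum_(p in L0) M p.1 p.2)%MM.
  apply/negP => /eqP Z; have := congr1 (mcoeff m0) Z.
  rewrite mcoeff0 /pfaffian_at raddf_sum (bigD1 L0) //= [X in _ + X]big1.
    rewrite addr0 (pm_prod h0) mulrzl raddfMz /= mcoeffX eqxx intz.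
    by move/eqP; rewrite (negbTE (pm_sign_nz h0)).
  move=> L /andP[hL ne]; rewrite (pm_prod hL) mulrzl raddfMz /= mcoeffX.
  case: eqP => [E|_]; last by rewrite mul0rz.
  by move: ne; rewrite (pm_inj hL h0 E) eqxx.
- move=> H; case: (pickP (perfect_matching e)) => [L hL|H0]; first by exists L.
  by move: H; rewrite /pfaffian_at big_pred0 ?eqxx.
Qed.
End S.

Unset Implicit Arguments.
Theorem lemma3p1 (n : nat) (e : rel 'I_n)
    (e_sym : ssrbool.symmetric e) (e_irr : irreflexive e)
    (f : 'I_n -> 'I_n -> {mpoly int[qdim e]})
    (hf : valid_labeling f) :
  (exists L : {set 'I_n * 'I_n}, perfect_matching e L) <->
  pfaffian_at e f != 0.
Proof. exact: (main hf e_sym e_irr). Qed.
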